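(* Let $\Gamma$ be a Gromov hyperbolic metric space and let $G$ be a group acting on $\Gamma$ by isometries such that the action is of general type. Let $P$ be a positive cone of $G$. Then the $P$-orbits in $\Gamma$ accumulate on every point of $\Lambda(G)$; that is, for every $x_0\in\Gamma$, every point of $\Lambda(G)$ is an accumulation point in $\partial\Gamma$ of the set $\{p x_0 \mid p\in P\}$ (equivalently $\Lambda(G)\subseteq \Lambda(P)$).
   Context: A positive cone of a group $G$ is a subsemigroup $P\subseteq G$ such that $G$ is the disjoint union $P\sqcup P^{-1}\sqcup\{1\}$, where $P^{-1}=\{g^{-1}:g\in P\}$. For a subset $H\subseteq G$ and $x_0\in\Gamma$, $\Lambda(H)\subseteq\partial\Gamma$ denotes the set of accumulation points in the Gromov boundary $\partial\Gamma$ of the orbit $\{hx_0\mid h\in H\}$; it does not depend on $x_0$. The action is called non-elementary if $|\Lambda(G)|\geq 3$, and it is of general type if it is non-elementary and $G$ does not fix any point of $\Lambda(G)$. *)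

(* Defs.v *)
From Stdlib Require Import Reals.
Open Scope R_scope.

Definition is_group {G : Type} (mul : G -> G -> G) (one : G) (inv : G -> G) : Prop :=
  (forall a b c, mul a (mul b c) = mul (mul a b) c) /\
  (forall a, mul one a = a) /\ (forall a, mul a one = a) /\
  (forall a, mul (inv a) a = one) /\ (forall a, mul a (inv a) = one).

Definition inv_set {G : Type} (inv : G -> G) (P : G -> Prop) (g : G) : Prop :=
  exists p, P p /\ g = inv p.

Definition positive_cone {G : Type} (mul : G -> G -> G) (one : G) (inv : G -> G)
    (P : G -> Prop) : Prop :=
  (forall a b, P a -> P b -> P (mul a b)) /\
  (forall g, P g \/ inv_set inv P g \/ g = one) /\
  (forall g, ~ (P g /\ inv_set inv P g)) /\
  (forall g, ~ (P g /\ g = one)) /\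
  (forall g, ~ (inv_set inv P g /\ g = one)).

Definition is_metric {X : Type} (d : X -> X -> R) : Prop :=
  (forall x y, 0 <= d x y) /\ (forall x y, d x y = 0 <-> x = y) /\
  (forall x y, d x y = d y x) /\ (forall x y z, d x z <= d x y + d y z).

Definition gprod {X : Type} (d : X -> X -> R) (w x y : X) : R :=
  (d x w + d y w - d x y) / 2.

Definition gromov_hyperbolic {X : Type} (d : X -> X -> R) : Prop :=
  exists delta, 0 <= delta /\
    forall w x y z, Rmin (gprod d w x y) (gprod d w y z) - delta <= gprod d w x z.

(* ---------- Gromov boundary via sequences (valid for non-proper spaces) ---------- *)
Definition conv_inf {X : Type} (d : X -> X -> R) (w : X) (u : nat -> X) : Prop :=
  forall K, exists N, forall i j, (N <= i)%nat -> (N <= j)%nat -> K <= gprod d w (u i) (u j).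

(* equivalence of sequences converging to infinity: liminf (u_i|v_j)_w = oo;
   points of the Gromov boundary are the equivalence classes. *)
Definition equiv_seq {X : Type} (d : X -> X -> R) (w : X) (u v : nat -> X) : Prop :=
  forall K, exists N, forall i j, (N <= i)%nat -> (N <= j)%nat -> K <= gprod d w (u i) (v j).

Definition isometric_action {G X : Type} (mul : G -> G -> G) (one : G)
    (d : X -> X -> R) (act : G -> X -> X) : Prop :=
  (forall x, act one x = x) /\
  (forall g h x, act (mul g h) x = act g (act h x)) /\
  (forall g x y, d (act g x) (act g y) = d x y).

(* The boundary point [u] (u converging to infinity) lies in Λ(H):
   it is the limit in ∂Γ of a sequence of orbit points h_n x0 with h_n ∈ H,
   i.e. (h_n x0) converges to infinity and is equivalent to u. *)
Definition in_limit_set {G X : Type} (d : X -> X -> R) (w : X) (act : G -> X -> X)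
    (H : G -> Prop) (x0 : X) (u : nat -> X) : Prop :=
  exists h : nat -> G, (forall n, H (h n)) /\
    conv_inf d w (fun n => act (h n) x0) /\
    equiv_seq d w (fun n => act (h n) x0) u.

Definition fixes_boundary_point {G X : Type} (d : X -> X -> R) (w : X)
    (act : G -> X -> X) (g : G) (u : nat -> X) : Prop :=
  equiv_seq d w (fun n => act g (u n)) u.

Definition non_elementary {G X : Type} (d : X -> X -> R) (w : X) (act : G -> X -> X)
    (x0 : X) : Prop :=
  exists u1 u2 u3 : nat -> X,
    conv_inf d w u1 /\ conv_inf d w u2 /\ conv_inf d w u3 /\
    in_limit_set d w act (fun _ => True) x0 u1 /\
    in_limit_set d w act (fun _ => True) x0 u2 /\
    in_limit_set d w act (fun _ => True) x0 u3 /\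
    ~ equiv_seq d w u1 u2 /\ ~ equiv_seq d w u1 u3 /\ ~ equiv_seq d w u2 u3.

Definition general_type {G X : Type} (d : X -> X -> R) (w : X) (act : G -> X -> X)
    (x0 : X) : Prop :=
  non_elementary d w act x0 /\
  ~ (exists u : nat -> X, conv_inf d w u /\ in_limit_set d w act (fun _ => True) x0 u /\
       forall g : G, fixes_boundary_point d w act g u).

(* Main.v *)
Require Import Defs.
From Stdlib Require Import Reals.
From Stdlib Require Import Lra Lia Classical ClassicalEpsilon.
Open Scope R_scope.

Lemma gprod_sym {X} (d : X -> X -> R) : is_metric d ->
  forall w x y, gprod d w x y = gprod d w y x.
Proof. intros (_&_&Hs&_) w x y. unfold gprod. rewrite (Hs x y). lra. Qed.

Lemma gprod_le_dist {X} (d : X -> X -> R) : is_metric d ->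
  forall w x y, gprod d w x y <= d x w.
Proof.
  intros (H0&_&Hs&Ht) w x y. unfold gprod.
  pose proof (Ht y x w) as H. rewrite (Hs y x) in H. lra.
Qed.

Lemma gprod_nonneg {X} (d : X -> X -> R) : is_metric d ->
  forall w x y, 0 <= gprod d w x y.
Proof.
  intros (H0&_&Hs&Ht) w x y. unfold gprod.
  pose proof (Ht x w y). rewrite (Hs w y) in *. lra.
Qed.

Lemma gprod_base {X} (d : X -> X -> R) : is_metric d ->
  forall a b x y, gprod d a x y <= gprod d b x y + d a b.
Proof.
  intros (H0&_&Hs&Ht) a b x y. unfold gprod.
  pose proof (Ht x b a). pose proof (Ht y b a). rewrite (Hs b a) in *. lra.
Qed.

Lemma gprod_iso {G X} (d : X -> X -> R) mul one (act : G -> X -> X) :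
  isometric_action mul one d act ->
  forall f a x y, gprod d (act f a) (act f x) (act f y) = gprod d a x y.
Proof. intros (_&_&Hi) f a x y. unfold gprod. rewrite !Hi. reflexivity. Qed.

Lemma act_inv_r {G X} (d : X -> X -> R) mul one inv (act : G -> X -> X) :
  is_group mul one inv -> isometric_action mul one d act ->
  forall f y, act f (act (inv f) y) = y.
Proof.
  intros (_&_&_&_&Hr) (H1&Hm&_) f y. rewrite <- Hm, Hr, H1. reflexivity.
Qed.

Lemma compose_lemma {G X} (d : X -> X -> R) mul one inv (act : G -> X -> X) :
  is_metric d -> is_group mul one inv -> isometric_action mul one d act ->
  forall (o : X) (x y : G),
  d o (act x o) - gprod d o (act (inv x) o) (act y o)
    <= gprod d o (act (mul x y) o) (act x o).
Proof.
  intros Hm Hg Ha o x y.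
  destruct Hm as (H0&_&Hs&Ht). destruct Hg as (Has&Hl&Hr&Hil&Hir).
  destruct Ha as (H1&Hmu&Hi).
  set (q := act (inv x) o).
  assert (Ex : act (inv x) (act x o) = o) by (rewrite <- Hmu, Hil, H1; reflexivity).
  assert (Exy : act (inv x) (act (mul x y) o) = act y o)
    by (rewrite <- Hmu, Has, Hil, Hl; reflexivity).
  assert (E1 : d (act (mul x y) o) o = d (act y o) q)
    by (rewrite <- (Hi (inv x)), Exy; reflexivity).
  assert (E3 : d (act (mul x y) o) (act x o) = d (act y o) o)
    by (rewrite <- (Hi (inv x)), Exy, Ex; reflexivity).
  assert (E4 : d o (act x o) = d q o)
    by (rewrite <- (Hi (inv x)), Ex; reflexivity).
  unfold gprod. rewrite E1, E3, E4. rewrite (Hs (act x o) o), E4.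
  rewrite (Hs q (act y o)). lra.
Qed.

Lemma inv_unique {G} (mul : G -> G -> G) one inv :
  is_group mul one inv -> forall g g', mul g g' = one -> inv g = g'.
Proof.
  intros (Has&Hl&Hr&Hil&Hir) g g' H.
  rewrite <- (Hr (inv g)), <- H, Has, Hil, Hl. reflexivity.
Qed.

Lemma neg_conv {F : nat -> nat -> R} :
  ~ (forall K, exists N, forall i j, (N <= i)%nat -> (N <= j)%nat -> K <= F i j) ->
  exists K, forall N, exists i j, (N <= i)%nat /\ (N <= j)%nat /\ F i j < K.
Proof.
  intro H. apply not_all_ex_not in H. destruct H as [K HK].
  exists K. intro N. apply not_ex_all_not with (n := N) in HK.
  apply not_all_ex_not in HK. destruct HK as [i Hi].
  apply not_all_ex_not in Hi. destruct Hi as [j Hj].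
  exists i, j. destruct (classic (N <= i)%nat); destruct (classic (N <= j)%nat);
  try (exfalso; apply Hj; intros; lia).
  repeat split; auto. apply Rnot_le_lt. intro; apply Hj; auto.
Qed.

Theorem theorem1p1 (X G : Type) (d : X -> X -> R)
    (mul : G -> G -> G) (one : G) (inv : G -> G) (act : G -> X -> X)
    (P : G -> Prop) :
  is_metric d -> gromov_hyperbolic d ->
  is_group mul one inv -> isometric_action mul one d act ->
  (forall w x1 : X, general_type d w act x1) ->
  positive_cone mul one inv P ->
  forall (w x0 : X) (u : nat -> X),
    conv_inf d w u ->
    in_limit_set d w act (fun _ => True) x0 u ->
    in_limit_set d w act P x0 u.
Proof.
  intros Hm Hhyp Hg Ha Hgen Hcone w x0 u Hu Hlim.
  destruct Hhyp as (delta & Hdel & Hh).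
  destruct Hlim as (h & _ & _ & Heq).
  pose proof Hm as (Hm0&_&Hms&Hmt).
  pose proof Hg as (Has&Hl&Hr&Hil&Hir).
  pose proof Ha as (H1&Hmu&Hiso).
  destruct Hcone as (Hsemi&Htri&_).
  set (z := fun n => act (inv (h n)) x0).
  (* a non-fixing element *)
  assert (Hf : exists f K, forall N, exists i j, (N <= i)%nat /\ (N <= j)%nat /\
             gprod d w (act f (z i)) (z j) < K).
  { destruct (classic (conv_inf d w z)) as [Hc|Hnc].
    - destruct (Hgen w x0) as [_ Hnf].
      assert (Hn : ~ forall g, fixes_boundary_point d w act g z).
      { intro Hall; apply Hnf; exists z; split; [exact Hc|split; [|exact Hall]].
        exists (fun n => inv (h n)); split; [intros; exact I|split; exact Hc]. }
      apply not_all_ex_not in Hn. destruct Hn as [f Hf].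
      exists f. exact (neg_conv Hf).
    - exists one. destruct (neg_conv Hnc) as [K HK]. exists K.
      intro N. destruct (HK N) as (i&j&?&?&?). exists i, j. rewrite H1. auto. }
  destruct Hf as (f & K & Hf).
  assert (HD : 0 <= (d x0 w)) by apply Hm0.
  assert (HK : 0 <= K).
  { destruct (Hf 0%nat) as (i0&j0&_&_&E).
    pose proof (gprod_nonneg d Hm w (act f (z i0)) (z j0)). lra. }
  assert (HF : 0 <= (d (act f x0) x0)) by apply Hm0.
  assert (Hkey : forall L, (d x0 w) < L -> exists p N, P p /\
            forall k, (N <= k)%nat -> L <= gprod d w (act p x0) (u k)).
  { intros L HL.
    set (M := L + 3 * (d x0 w) + K + (d (act f x0) x0) + delta).
    destruct (Heq M) as [N1 HN1].
    destruct (Hf N1) as (i & j & Hi & Hj & Hij).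
    set (g := mul (h j) (mul f (inv (h i)))).
    set (g' := mul (h i) (mul (inv f) (inv (h j)))).
    assert (Hdist : forall n k, (N1 <= n)%nat -> (N1 <= k)%nat ->
               M - (d x0 w) <= d x0 (act (h n) x0)).
    { intros n k Hn Hk. pose proof (HN1 n k Hn Hk).
      pose proof (gprod_le_dist d Hm w (act (h n) x0) (u k)).
      pose proof (Hmt (act (h n) x0) x0 w). rewrite (Hms (act (h n) x0) x0) in *.
      lra. }
    assert (Bg : forall k, (N1 <= k)%nat -> L <= gprod d w (act g x0) (u k)).
    { intros k Hk.
      pose proof (HN1 j k Hj Hk) as E1.
      pose proof (Hdist j k Hj Hk) as E2.
      pose proof (compose_lemma d mul one inv act Hm Hg Ha x0 (h j) (mul f (inv (h i)))) as E3.
      rewrite (Hmu f (inv (h i))) in E3. fold g in E3.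
      change (act (inv (h i)) x0) with (z i) in E3.
      change (act (inv (h j)) x0) with (z j) in E3.
      rewrite (gprod_sym d Hm x0 (z j)) in E3.
      pose proof (gprod_base d Hm x0 w (act f (z i)) (z j)) as E4.
      pose proof (gprod_base d Hm x0 w (act g x0) (act (h j) x0)) as E5.
      pose proof (Hh w (act g x0) (act (h j) x0) (u k)) as E6.
      assert (E7 : M - 3 * (d x0 w) - K - (d (act f x0) x0) <= Rmin (gprod d w (act g x0) (act (h j) x0))
                                       (gprod d w (act (h j) x0) (u k))).
      { apply Rmin_glb; lra. }
      unfold M in *. lra. }
    assert (Bg' : forall k, (N1 <= k)%nat -> L <= gprod d w (act g' x0) (u k)).
    { intros k Hk.
      pose proof (HN1 i k Hi Hk) as E1.
      pose proof (Hdist i k Hi Hk) as E2.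
      pose proof (compose_lemma d mul one inv act Hm Hg Ha x0 (h i) (mul (inv f) (inv (h j)))) as E3.
      rewrite (Hmu (inv f) (inv (h j))) in E3. fold g' in E3.
      change (act (inv (h i)) x0) with (z i) in E3.
      change (act (inv (h j)) x0) with (z j) in E3.
      rewrite <- (gprod_iso d mul one act Ha f x0 (z i)) in E3.
      rewrite (act_inv_r d mul one inv act Hg Ha) in E3.
      pose proof (gprod_base d Hm (act f x0) x0 (act f (z i)) (z j)) as E8.
      pose proof (gprod_base d Hm x0 w (act f (z i)) (z j)) as E4.
      pose proof (gprod_base d Hm x0 w (act g' x0) (act (h i) x0)) as E5.
      pose proof (Hh w (act g' x0) (act (h i) x0) (u k)) as E6.
      assert (E7 : M - 3 * (d x0 w) - K - (d (act f x0) x0) <= Rmin (gprod d w (act g' x0) (act (h i) x0))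
                                       (gprod d w (act (h i) x0) (u k))).
      { apply Rmin_glb; lra. }
      unfold M in *. lra. }
    assert (Hgg : mul g g' = one).
    { unfold g, g'. rewrite <- !Has.
      assert (Hc : forall a b c, mul a b = one -> mul a (mul b c) = c).
      { intros a b c Hab. rewrite Has, Hab, Hl. reflexivity. }
      rewrite (Hc (inv (h i)) (h i)) by apply Hil.
      rewrite (Hc f (inv f)) by apply Hir. apply Hir. }
    destruct (Htri g) as [Hp | [Hp | Hp]].
    - exists g, N1. auto.
    - destruct Hp as (p & Pp & Ep).
      assert (p = g').
      { rewrite <- (inv_unique mul one inv Hg g g' Hgg), Ep.
        symmetry. apply (inv_unique mul one inv Hg). apply Hil. }
      subst p. exists g', N1. auto.
    - exfalso. pose proof (Bg N1 (le_n _)) as E. rewrite Hp, H1 in E.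
      pose proof (gprod_le_dist d Hm w x0 (u N1)). lra. }
  assert (Hk2 : forall n : nat, exists pN : G * nat, P (fst pN) /\
            forall k, (snd pN <= k)%nat ->
              INR n + 2 * delta + (d x0 w) + 1 <= gprod d w (act (fst pN) x0) (u k)).
  { intro n. destruct (Hkey (INR n + 2 * delta + (d x0 w) + 1)) as (p & N & Pp & Hp).
    { pose proof (pos_INR n). lra. }
    exists (p, N). simpl. auto. }
  set (sel := fun n => proj1_sig (constructive_indefinite_description _ (Hk2 n))).
  assert (Hsel : forall n, P (fst (sel n)) /\ forall k, (snd (sel n) <= k)%nat ->
              INR n + 2 * delta + (d x0 w) + 1 <= gprod d w (act (fst (sel n)) x0) (u k)).
  { intro n. exact (proj2_sig (constructive_indefinite_description _ (Hk2 n))). }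
  exists (fun n => fst (sel n)). split; [intro n; apply Hsel|split].
  - intro K0. destruct (INR_unbounded K0) as [N HN]. exists N.
    intros i j Hi Hj.
    set (k := max (snd (sel i)) (snd (sel j))).
    pose proof (proj2 (Hsel i) k (Nat.le_max_l _ _)) as A1.
    pose proof (proj2 (Hsel j) k (Nat.le_max_r _ _)) as A2.
    pose proof (Hh w (act (fst (sel i)) x0) (u k) (act (fst (sel j)) x0)) as A3.
    rewrite (gprod_sym d Hm w (u k)) in A3.
    pose proof (le_INR _ _ Hi). pose proof (le_INR _ _ Hj).
    assert (INR N + 2 * delta + (d x0 w) + 1 <= Rmin (gprod d w (act (fst (sel i)) x0) (u k))
              (gprod d w (act (fst (sel j)) x0) (u k))) by (apply Rmin_glb; lra).
    simpl. lra.
  - intro K0. destruct (Hu (K0 + delta)) as [N' HN'].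
    destruct (INR_unbounded K0) as [N0 HN0].
    exists (max N0 N'). intros i j Hi Hj.
    set (k := max (snd (sel i)) N').
    pose proof (proj2 (Hsel i) k (Nat.le_max_l _ _)) as A1.
    assert (Hk' : (N' <= k)%nat) by apply Nat.le_max_r.
    assert (Hj' : (N' <= j)%nat) by lia.
    assert (Hi' : (N0 <= i)%nat) by lia.
    pose proof (HN' k j Hk' Hj') as A2.
    pose proof (Hh w (act (fst (sel i)) x0) (u k) (u j)) as A3.
    pose proof (le_INR _ _ Hi').
    assert (K0 + delta <= Rmin (gprod d w (act (fst (sel i)) x0) (u k))
              (gprod d w (u k) (u j))) by (apply Rmin_glb; lra).
    simpl. lra.
Qed.
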